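(* Let $k\ge 3$ and $A\in\mathcal{M}_d$. Then $$\operatorname{tr}_1\big[(1\,2\cdots k)^{T_k}(A\otimes\mathbb{1}^{\otimes(k-1)})\big]=\Big(\cdots\big((A\otimes\mathbb{1}^{\otimes(k-2)})^{R_{k-1,k-2}}\big)^{R_{k-1,k-3}}\cdots\Big)^{R_{k-1,1}},$$ i.e. the reshufflings $R_{k-1,k-2},R_{k-1,k-3},\dots,R_{k-1,1}$ are applied successively, in this order, to $A\otimes\mathbb{1}^{\otimes(k-2)}\in\mathcal{M}_d^{\otimes(k-1)}$.
   Context: $\mathcal{M}_d$ denotes complex $d\times d$ matrices; $\{|i\rangle\}$ is a fixed orthonormal basis of $\mathbb{C}^d$. A permutation $\sigma\in S_k$ acts on $(\mathbb{C}^d)^{\otimes k}$ by $\sigma|v_1\rangle\otimes\cdots\otimes|v_k\rangle=|v_{\sigma^{-1}(1)}\rangle\otimes\cdots\otimes|v_{\sigma^{-1}(k)}\rangle$; $(1\,2\cdots k)$ is the cycle $1\to2\to\cdots\to k\to1$. $T_k$ is the partial transpose on the $k$-th factor in the basis $\{|i\rangle\}$; $\operatorname{tr}_1$ is the partial trace over the first factor. Reshuffling of sites $a,b$ on $\mathcal{M}_d^{\otimes n}$: $R_{a,b}$ is the linear map defined on basis elements by sending $|i_1\dots i_n\rangle\langle j_1\dots j_n|$ to the operator obtained by exchanging the $a$-th ket index $i_a$ with the $b$-th bra index $j_b$, i.e. the new $a$-th ket index is $j_b$ and the new $b$-th bra index is $i_a$, all other indices unchanged. *)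

(* Defs.v *)
From HB Require Import structures.
From mathcomp Require Import all_boot all_order all_fingroup all_algebra.
Set Implicit Arguments. Unset Strict Implicit. Unset Printing Implicit Defensive.
Import GRing.Theory Num.Theory.
Local Open Scope ring_scope.

(* Operators on (C^d)^{\otimes n}, given by their matrix entries
   <i_1..i_n| X |j_1..j_n> in the product basis; sites are numbered 0..n-1
   (site s here is site s+1 of the paper). *)
Definition idx (d n : nat) := {ffun 'I_n -> 'I_d}.
Definition op (C : Type) (d n : nat) := idx d n -> idx d n -> C.

Section Ops.
Variables (C : comNzRingType) (d : nat).

Definition opmul n (X Y : op C d n) : op C d n :=
  fun i j => \sum_(l : idx d n) X i l * Y l j.

(* permutation operator: sigma |v_1..v_n> = |v_{sigma^-1 1} .. v_{sigma^-1 n}> *)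
Definition perm_op n (s : {perm 'I_n}) : op C d n :=
  fun i j => [forall m : 'I_n, i m == j ((s^-1)%g m)]%:R.

Definition set_idx n (i : idx d n) (s : 'I_n) (a : 'I_d) : idx d n :=
  [ffun l => if l == s then a else i l].

Definition ptrans n (t : 'I_n) (X : op C d n) : op C d n :=
  fun p q => X (set_idx p t (q t)) (set_idx q t (p t)).

(* reshuffling R_{a,b}: |i><j| |-> exchange ket index i_a with bra index j_b *)
Definition reshuffle n (a b : 'I_n) (X : op C d n) : op C d n :=
  fun p q => X (set_idx p a (q b)) (set_idx q b (p a)).

Definition cons_idx n (a : 'I_d) (i : idx d n) : idx d n.+1 :=
  [ffun l => if unlift ord0 l is Some l' then i l' else a].

Definition ptr1 n (X : op C d n.+1) : op C d n :=
  fun i j => \sum_(a : 'I_d) X (cons_idx a i) (cons_idx a j).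

Definition ampl (A : 'M[C]_d) n : op C d n.+1 :=
  fun i j => A (i ord0) (j ord0) *
             [forall l : 'I_n, i (lift ord0 l) == j (lift ord0 l)]%:R.
End Ops.

(* the cycle (1 2 ... k): site s |-> site s+1 (mod k) *)
Definition cyc (k : nat) : {perm 'I_k} := perm (@ordS_inj k).

(* Main.v *)
Require Import Defs.
From HB Require Import structures.
From mathcomp Require Import all_boot all_order all_fingroup all_algebra zify.
Set Implicit Arguments. Unset Strict Implicit. Unset Printing Implicit Defensive.
Import GRing.Theory.
Local Open Scope ring_scope.

Section Aux.
Variables (C : comNzRingType) (d : nat).

Lemma set_idxE n (p : idx d n) s a t : set_idx p s a t = if t == s then a else p t.
Proof. by rewrite /set_idx ffunE. Qed.

Lemma eqr_inord m x y : (x <= m)%N -> (y <= m)%N -> (@inord m x == inord y) = (x == y).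
Proof. by move=> hx hy; rewrite -val_eqE /= !inordK. Qed.
Lemma eqr_inordr m (r : 'I_m.+1) y : (y <= m)%N -> (r == inord y) = (val r == y).
Proof. by move=> hy; rewrite -val_eqE /= !inordK. Qed.

Lemma foldr_resh m (X : op C d m.+1) n : forall j p q, (j + n <= m.+1)%N ->
 foldr (fun b Y => reshuffle ord_max (inord b) Y) X (iota j n) p q =
 X (set_idx p ord_max (if n == 0%N then p ord_max else q (inord (j+n).-1)))
   [ffun r : 'I_m.+1 => if (j <= r < j+n)%N then (if val r == j then p ord_max else q (inord r.-1)) else q r].
Proof.
elim: n => [|n IH] j p q hjn.
  rewrite /=; congr X; apply/ffunP => r; rewrite !ffunE.
    by case: eqP => // ->.
  by case: ifP => //; rewrite addn0 => /andP[h1 h2]; move: (leq_trans h2 h1); rewrite ltnn.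
rewrite /= /reshuffle IH; last by rewrite addSnnS.
have hj : (j <= m)%N by move: hjn; rewrite addnS ltnS => /(leq_trans (leq_addr _ _)).
congr X; apply/ffunP => r; rewrite !ffunE.
  case: (r =P ord_max) => // _; rewrite eqxx.
  case: n {IH} hjn => [|n] hjn /=; first by rewrite addn1.
  have hb : (j + n.+1 <= m)%N by move: hjn; rewrite addnS ltnS.
  rewrite eqr_inord //.
  by rewrite -[X in _ == X]addn0 eqn_add2l /= [(j + n.+2)%N]addnS.
case: (ltngtP r j) => hr.
- by rewrite /= eqr_inordr // ltn_eqF.
- rewrite /= addSnnS; case: ifP => _; last by rewrite eqr_inordr // gtn_eqF.
  rewrite eqxx; case: eqP => [->|/eqP h] //.
  have hr1 : (r.-1 <= m)%N by apply: leq_trans (leq_pred _) _; rewrite -ltnS.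
  rewrite eqr_inord //; have -> : (r.-1 == j) = false by apply/eqP; lia.
  done.
- by rewrite /= eqr_inordr // (_ : \val r == j) ?hr ?addnS ?ltnS ?leq_addr //; apply/eqP.
Qed.

Lemma cons_idxE n a (i : idx d n.+1) (s : 'I_n.+2) :
  cons_idx a i s = if val s == 0%N then a else i (inord (val s).-1).
Proof.
rewrite /cons_idx ffunE; case: unliftP => [l|] -> /= //.
by rewrite add0n inord_val.
Qed.

Lemma cycV k (s : 'I_k.+1) :
  val ((cyc k.+1)^-1 s)%g = if val s == 0%N then k else (val s).-1.
Proof.
have -> : ((cyc k.+1)^-1 s)%g = ord_pred s.
  by apply: (@perm_inj _ (cyc k.+1)); rewrite permKV /cyc permE ord_predK.
rewrite /=; case: eqP => [->|h]; first by rewrite add0n /= modn_small.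
rewrite addnC -subn1 -addnBA; last by case: (val s) h.
have hs := ltn_ord s; rewrite modnDl modn_small subn1 //; lia.
Qed.

Lemma sum_cons n (F : idx d n.+1 -> C) :
  \sum_(l : idx d n.+1) F l = \sum_(a : 'I_d) \sum_(i : idx d n) F (cons_idx a i).
Proof.
rewrite pair_big /=.
rewrite (reindex (fun pr : 'I_d * idx d n => cons_idx pr.1 pr.2)) //.
exists (fun l : idx d n.+1 => (l ord0, [ffun s => l (lift ord0 s)])) => [[a i] _|l _] /=.
  congr pair; first by rewrite /cons_idx ffunE unlift_none.
  by apply/ffunP => s; rewrite ffunE /cons_idx ffunE liftK.
apply/ffunP => s; rewrite /cons_idx ffunE; case: unliftP => [l'|] -> //.
exact: ffunE.
Qed.
End Aux.

From Stdlib Require Import FunctionalExtensionality.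

Lemma sum_delta (C : comNzRingType) (T : finType) (F : T -> C) j :
  \sum_(i : T) F i * (i == j)%:R = F j.
Proof.
rewrite (bigD1 j) //= eqxx mulr1 big1 ?addr0 // => i /negPf ->; by rewrite mulr0.
Qed.

Lemma ampl_cons (C : comNzRingType) d (A : 'M[C]_d) n a b (i j : idx d n) :
  @ampl C d A n (cons_idx b i) (cons_idx a j) = A b a * (i == j)%:R.
Proof.
rewrite /ampl /cons_idx !ffunE !unlift_none; congr (_ * (nat_of_bool _)%:R).
apply/idP/idP => [/forallP h|/eqP ->]; last by apply/forallP => l; rewrite !ffunE liftK.
apply/eqP/ffunP => l; have := h l; by rewrite !ffunE liftK => /eqP.
Qed.

Lemma key d m (hm : (0 < m)%N) (a b : 'I_d) (i j : idx d m.+1) :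
 [forall s : 'I_m.+2, set_idx (cons_idx a i) ord_max (cons_idx b j ord_max) s == set_idx (cons_idx b j) ord_max (cons_idx a i ord_max) ((cyc m.+2)^-1 s)%g]
 = [&& a == i ord_max, b == i ord0 & [forall l : 'I_m, set_idx i ord_max (j (inord m.-1)) (lift ord0 l) == [ffun r : 'I_m.+1 => if (0 <= r < m)%N then if val r == 0%N then i ord_max else j (inord r.-1) else j r] (lift ord0 l)]].
Proof.
pose I k := i (inord k); pose J k := j (inord k).
pose E k := (if k == m.+1 then J m else if k == 0%N then a else I k.-1) ==
            (if k == 0%N then I m else if k.-1 == 0%N then b else J k.-2).
pose F l := (if l.+1 == m then J m.-1 else I l.+1) == (if (l.+1 < m)%N then J l else J l.+1).
have EL : forall s : 'I_m.+2, (set_idx (cons_idx a i) ord_max (cons_idx b j ord_max) s == set_idx (cons_idx b j) ord_max (cons_idx a i ord_max) ((cyc m.+2)^-1 s)%g) = E s.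
  move=> s; rewrite !set_idxE !cons_idxE -!val_eqE /= cycV.
  rewrite /E /I /J; case: s => [[|k] hk] /=; first by rewrite eqxx.
  have hk' : (k < m.+1)%N by [].
  by rewrite (ltn_eqF hk').
have hl : forall l : 'I_m, lift ord0 l = inord l.+1.
  move=> l; apply: val_inj; change (l.+1 = nat_of_ord (inord l.+1 : 'I_m.+1)); by rewrite inordK // ltnS.
have ER : forall l : 'I_m, (set_idx i ord_max (j (inord m.-1)) (lift ord0 l) == [ffun r : 'I_m.+1 => if (0 <= r < m)%N then if val r == 0%N then i ord_max else j (inord r.-1) else j r] (lift ord0 l)) = F l.
  move=> l; rewrite set_idxE ffunE hl.
  have hv : nat_of_ord (inord l.+1 : 'I_m.+1) = l.+1 by rewrite inordK // ltnS.
  have hv' : val (inord l.+1 : 'I_m.+1) = l.+1 := hv.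
  have e1 : (inord l.+1 == ord_max :> 'I_m.+1) = (l.+1 == m) by rewrite -val_eqE hv'.
  by rewrite e1 hv hv' /F /I /J.
have im : i ord_max = I m by rewrite /I; congr (i _); apply: val_inj; rewrite /= inordK.
have i0 : i ord0 = I 0%N by rewrite /I; congr (i _); apply: val_inj; rewrite /= inordK.
rewrite (eq_forallb EL) (eq_forallb ER) im i0.
have m0 : (m == 0%N) = false by rewrite gtn_eqF.
have m0' : (0 == m)%N = false by rewrite eq_sym.
apply/idP/idP.
  move/forallP => H.
  have H0 := H ord0; rewrite /E /= in H0.
  have H1 := H (inord 1); rewrite /E inordK // /= eqSS m0' in H1.
  rewrite H0 eq_sym H1 /=; apply/forallP => l.
  have Hl := H (inord l.+2); rewrite /E inordK /= in Hl; last by rewrite !ltnS.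
  move: Hl; rewrite /F eqSS; case: (l.+1 =P m) => [e|hne] /=.
  have -> : m.-1 = (l : nat) by lia.
  have -> : (l.+1 < m)%N = false by rewrite e ltnn.
  by rewrite e eq_sym.
  by have -> : (l.+1 < m)%N by have := ltn_ord l; lia.
move=> /and3P [/eqP ha /eqP hb /forallP H]; apply/forallP => [[k hk]]; rewrite /E /=.
case: k hk => [|[|l]] hk /=; first by rewrite ha.
  by rewrite eqSS m0' hb.
have hlm : (l < m)%N by [].
have := H (Ordinal hlm); rewrite /F /= eqSS; case: (l.+1 =P m) => [e|hne] /=.
  have -> : m.-1 = (l : nat) by lia.
  have -> : (l.+1 < m)%N = false by rewrite e ltnn.
  by rewrite e eq_sym.
by have -> : (l.+1 < m)%N by move: hlm hne; clear; lia.
Qed.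

Theorem proposition5 (C : numClosedFieldType) (d m : nat) (hm : (1 <= m)%N)
    (A : 'M[C]_d) :
  ptr1 (opmul (ptrans ord_max (@perm_op C d m.+2 (cyc m.+2))) (@ampl C d A m.+1))
  = foldl (fun (X : op C d m.+1) (b : nat) => reshuffle ord_max (inord b) X)
          (@ampl C d A m) (rev (iota 0 m)).
Proof.
apply: functional_extensionality => i; apply: functional_extensionality => j.
rewrite foldl_rev foldr_resh ?add0n // (gtn_eqF hm).
rewrite /ptr1 /opmul.
rewrite /ptr1 /opmul. under eq_bigr => a _ do rewrite sum_cons.
set PT := ptrans _ _.
have E : forall a b, \sum_i0 PT (cons_idx a i) (cons_idx b i0) * ampl A (cons_idx b i0) (cons_idx a j)
   = PT (cons_idx a i) (cons_idx b j) * A b a.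
  by move=> a b; under eq_bigr => i0 _ do rewrite ampl_cons mulrA; rewrite sum_delta.
rewrite (eq_bigr _ (fun a _ => eq_bigr _ (fun b _ => E a b))) {E} /PT /ptrans /perm_op /ampl.
under eq_bigr => a _ do (under eq_bigr => b _ do rewrite key //).
set Q := [forall l, _].
rewrite (bigD1 (i ord_max)) //= [X in _ + X]big1 ?addr0 => [|a /negPf ha]; last first.
  by rewrite big1 // => b _; rewrite ha mul0r.
rewrite (bigD1 (i ord0)) //= [X in _ + X]big1 ?addr0 => [|b /negPf hb]; last first.
  by rewrite hb andbF mul0r.
rewrite !eqxx /= set_idxE ffunE hm /= mulrC; congr (A _ _ * _).
by rewrite -val_eqE /= eq_sym (gtn_eqF hm).
Qed.
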